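(* For every $d\ge 1$ there is a constant $C_d$ such that the following holds. Let $\sigma\in(0,1)$, let $B$ be a ball of radius $r>0$ in $\mathbb{R}^d$, and let $L$ be a finite set of closed line segments in $\mathbb{R}^d$ such that (i) $L$ is $\sigma$-exposed, (ii) every segment of $L$ intersects $B$, and (iii) every segment of $L$ has length at least $r$. Then $|L|\le C_d/\sigma^{2d+2}$.
   Context: For sets $X, Y\subseteq\mathbb{R}^d$ and $\sigma>0$, $X$ $\sigma$-shadows $Y$ if $\max_{q\in Y} \mathrm{dist}(q, X) \le \sigma\cdot \mathrm{diam}(Y)$, where $\mathrm{dist}(q,X)=\min_{p\in X}\|q-p\|$. A set of objects is $\sigma$-exposed if no object in the set $\sigma$-shadows another (distinct) object of the set. *)

(* Defs.v *)
From Stdlib Require Import Reals.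
From mathcomp Require Import ssreflect ssrfun ssrbool eqtype ssrnat seq fintype bigop.
Set Implicit Arguments.
Unset Strict Implicit.
Unset Printing Implicit Defensive.
Local Open Scope R_scope.

Definition pt (d : nat) := 'I_d -> R.

Definition vsub d (x y : pt d) : pt d := fun i => x i - y i.

Definition norm d (x : pt d) : R := sqrt (\big[Rplus/0]_(i < d) (x i * x i)).
Definition edist d (x y : pt d) : R := norm (vsub x y).

Definition region d := pt d -> Prop.

Definition is_diam d (Y : region d) (D : R) : Prop :=
  is_lub (fun t => exists p q, Y p /\ Y q /\ t = edist p q) D.

(* X sigma-shadows Y : max_{q in Y} dist(q,X) <= sigma * diam(Y).
   (dist(q,X) is a minimum, attained; so dist(q,X) <= c iff some p in X is
   within c of q.) *)
Definition shadows d (sigma : R) (X Y : region d) : Prop :=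
  forall D, is_diam Y D ->
  forall q, Y q -> exists p, X p /\ edist q p <= sigma * D.

Definition segment d := (pt d * pt d)%type.

Definition seg_set d (s : segment d) : region d :=
  fun x => exists t, 0 <= t <= 1 /\ forall i, x i = fst s i + t * (snd s i - fst s i).

Definition seg_length d (s : segment d) : R := edist (fst s) (snd s).

Definition seg0 d : segment d := (fun _ => 0, fun _ => 0).

(* A finite set of segments is represented by a list whose entries are
   pairwise distinct as point sets; its cardinality |L| is the list size. *)
Definition distinct_segs d (L : seq (segment d)) : Prop :=
  forall i j, (i < size L)%nat -> (j < size L)%nat -> i <> j ->
    ~ (forall x, seg_set (nth (seg0 d) L i) x <-> seg_set (nth (seg0 d) L j) x).

Definition exposed d (sigma : R) (L : seq (segment d)) : Prop :=
  forall i j, (i < size L)%nat -> (j < size L)%nat -> i <> j ->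
    ~ shadows sigma (seg_set (nth (seg0 d) L i)) (seg_set (nth (seg0 d) L j)).

Definition ball d (c : pt d) (r : R) : region d := fun x => edist x c <= r.

Definition intersects d (X Y : region d) : Prop := exists x, X x /\ Y x.

(* Main.v *)
Require Import Defs.
From Stdlib Require Import Reals Lra Lia ZArith IndefiniteDescription.
From mathcomp Require Import ssreflect ssrfun ssrbool eqtype ssrnat seq fintype bigop finfun.
From HB Require Import structures.
From HB Require Import structures.
Local Open Scope R_scope.

Lemma Rplus_assoc' : associative Rplus.
Proof. move=> x y z; by rewrite Rplus_assoc. Qed.
HB.instance Definition _ := Monoid.isComLaw.Build R 0 Rplus Rplus_assoc' Rplus_comm Rplus_0_l.

Lemma bigR_recr n (f : 'I_n.+1 -> R) :
  \big[Rplus/0]_(i < n.+1) f i = Rplus (\big[Rplus/0]_(i < n) f (widen_ord (leqnSn n) i)) (f ord_max).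
Proof. exact: big_ord_recr. Qed.

Lemma big_nonneg n (f : 'I_n -> R) : (forall i, 0 <= f i) -> 0 <= \big[Rplus/0]_(i < n) f i.
Proof.
elim: n f => [|n IH] f Hf; first by rewrite big_ord0; lra.
rewrite bigR_recr. have := IH (fun i => f (widen_ord (leqnSn n) i)) (fun i => Hf _).
have := Hf ord_max. lra.
Qed.

Lemma big_ge_term n (f : 'I_n -> R) : (forall i, 0 <= f i) -> forall k, f k <= \big[Rplus/0]_(i < n) f i.
Proof.
elim: n f => [|n IH] f Hf k; first by case: k.
rewrite bigR_recr.
case: (unliftP ord_max k) => [j|] ->.
- have := IH (fun i => f (widen_ord (leqnSn n) i)) (fun i => Hf _) j.
  have -> : lift ord_max j = widen_ord (leqnSn n) j by apply: val_inj; rewrite /= /bump leqNgt ltn_ord.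
  have := Hf ord_max. lra.
- have := @big_nonneg n (fun i => f (widen_ord (leqnSn n) i)) (fun i => Hf _). lra.
Qed.

Lemma big_le_const n (f : 'I_n -> R) a : (forall i, f i <= a) -> \big[Rplus/0]_(i < n) f i <= INR n * a.
Proof.
elim: n f => [|n IH] f Hf; first by rewrite big_ord0 /=; lra.
rewrite bigR_recr S_INR. have := IH (fun i => f (widen_ord (leqnSn n) i)) (fun i => Hf _).
have := Hf ord_max. lra.
Qed.

Lemma norm_ge_coord d (v : pt d) k : Rabs (v k) <= norm v.
Proof.
rewrite /norm -sqrt_Rsqr_abs. apply: sqrt_le_1_alt.
rewrite /Rsqr. apply: (@big_ge_term d (fun i => v i * v i)) => i.
apply: Rle_0_sqr.
Qed.

Lemma norm_le_coord d (v : pt d) a : 0 <= a -> (forall k, Rabs (v k) <= a) -> norm v <= sqrt (INR d) * a.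
Proof.
move=> Ha H. rewrite /norm -(sqrt_Rsqr a Ha) -sqrt_mult_alt; last by apply: pos_INR.
apply: sqrt_le_1_alt. apply: big_le_const => i.
rewrite /Rsqr. have := H i. have := Rabs_pos (v i).
have -> : v i * v i = Rabs (v i) * Rabs (v i) by rewrite -Rabs_mult Rabs_right //; apply: Rle_ge; apply: Rle_0_sqr.
move=> h1 h2. by apply: Rmult_le_compat.
Qed.
Lemma up_range w x : 0 < w -> -1 <= x <= 1 ->
  (0 <= up (x/w) + up (1/w) <= 2 * up (1/w))%Z.
Proof.
move=> Hw Hx.
have [h1 h2] := archimed (x/w). have [h3 h4] := archimed (1/w).
have Ha : -(1/w) <= x/w <= 1/w.
  have hi : 0 < /w by apply: Rinv_0_lt_compat.
  rewrite /Rdiv. nra.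
split.
- have : (0 < up (x/w) + up (1/w))%Z; last lia.
  apply: lt_IZR. rewrite plus_IZR. lra.
- have : (up (x/w) < up (1/w) + 1)%Z; last lia.
  apply: lt_IZR. rewrite plus_IZR. lra.
Qed.

Lemma up_close w x x' : 0 < w -> up (x/w) = up (x'/w) -> Rabs (x - x') < w.
Proof.
move=> Hw E.
have [h1 h2] := archimed (x/w). have [h3 h4] := archimed (x'/w).
rewrite E in h1 h2.
have : Rabs (x/w - x'/w) < 1 by apply: Rabs_def1; lra.
have -> : x/w - x'/w = (x - x') * /w by field; lra.
rewrite Rabs_mult (Rabs_right (/w)); last by left; apply: Rinv_0_lt_compat.
move=> h. have := Rmult_lt_compat_r w _ _ Hw h.
have -> : Rabs (x - x') * / w * w = Rabs (x - x') by field; lra.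
lra.
Qed.

Definition kval (w x : R) : nat := Z.to_nat (up (x / w) + up (1/w)).
Definition Kp (w : R) : nat := Z.to_nat (2 * up (1/w)).
Definition kf (w x : R) : 'I_(Kp w).+1 := inord (kval w x).

Lemma kval_le w x : 0 < w -> -1 <= x <= 1 -> (kval w x <= Kp w)%N.
Proof.
move=> Hw Hx. have := @up_range w x Hw Hx. rewrite /kval /Kp => H.
apply/leP. apply Z2Nat.inj_le; lia.
Qed.

Lemma kf_close w x x' : 0 < w -> -1 <= x <= 1 -> -1 <= x' <= 1 ->
  kf w x = kf w x' -> Rabs (x - x') < w.
Proof.
move=> Hw Hx Hx' E.
have k1 := @kval_le w x Hw Hx. have k2 := @kval_le w x' Hw Hx'.
have : kval w x = kval w x'.
  have := congr1 (@nat_of_ord _) E. by rewrite /kf !inordK.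
rewrite /kval. have h1 := @up_range w x Hw Hx. have h2 := @up_range w x' Hw Hx'. move=> h3.
apply: (@up_close w x x' Hw). apply Z2Nat.inj in h3; lia.
Qed.
Lemma absprod a b A B : Rabs a <= A -> Rabs b <= B -> Rabs (a*b) <= A*B.
Proof.
move=> h1 h2. rewrite Rabs_mult. apply: Rmult_le_compat => //; apply: Rabs_pos.
Qed.


Lemma absle x b : Rabs x <= b -> - b <= x <= b.
Proof. move=> h. have := Rle_abs x. have := Rle_abs (- x). rewrite Rabs_Ropp. lra. Qed.

Lemma tri3 a b c : Rabs (a + b + c) <= Rabs a + Rabs b + Rabs c.
Proof. have := Rabs_triang (a+b) c. have := Rabs_triang a b. lra. Qed.

Lemma min_gap a b lY lX w : 0 <= b -> 0 < lY -> lY <= lX -> Rabs (a - b) <= w ->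
  0 <= a * lY - Rmin (a*lY) (b*lX) <= w * lY.
Proof.
move=> hb hl hll hab. have [h1 h2] := @absle _ _ hab.
rewrite /Rmin; case: Rle_dec => h; first by nra.
nra.
Qed.

Lemma coord_bound (pY pX uY uX lY lX tY tX s r w : R) :
 0 < r -> r <= lY -> lY <= lX -> 0 <= tY <= 1 -> 0 <= tX <= 1 -> 0 <= s <= 1 -> 0 <= w ->
 Rabs uX <= 1 -> Rabs (pY - pX) <= r * w -> Rabs (uY - uX) <= w -> Rabs (tY - tX) <= w ->
 Rabs ((pY - tY*lY*uY) + s*(lY*uY) -
   ((pX - Rmin (tY*lY) (tX*lX)*uX) + s*((pX + Rmin ((1-tY)*lY) ((1-tX)*lX)*uX) - (pX - Rmin (tY*lY) (tX*lX)*uX))))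
   <= 3*w*lY.
Proof.
move=> hr hrl hll htY htX hs hw huX hp hu ht.
set t0 := Rmin (tY*lY) (tX*lX). set t1 := Rmin ((1-tY)*lY) ((1-tX)*lX).
have g0 : 0 <= tY * lY - t0 <= w * lY by apply: min_gap => //; lra.
have g1 : 0 <= (1-tY) * lY - t1 <= w * lY.
  apply: min_gap => //; try lra. by rewrite (_ : 1 - tY - (1 - tX) = - (tY - tX)); [rewrite Rabs_Ropp|ring].
pose E0 := (pY - pX) - tY*lY*(uY - uX) - (tY*lY - t0)*uX.
pose E1 := (pY - pX) + (1-tY)*lY*(uY - uX) + ((1-tY)*lY - t1)*uX.
have hE0 : Rabs E0 <= 3*w*lY.
  have a1 : Rabs (tY*lY*(uY-uX)) <= lY * w.
    apply: absprod => //. rewrite Rabs_right; nra.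
  have a2 : Rabs ((tY*lY - t0)*uX) <= w*lY * 1.
    apply: absprod => //. rewrite Rabs_right; lra.
  have -> : E0 = (pY - pX) + (- (tY*lY*(uY-uX))) + (- ((tY*lY - t0)*uX)) by rewrite /E0; ring.
  have := tri3 (pY - pX) (- (tY*lY*(uY-uX))) (- ((tY*lY - t0)*uX)). rewrite !Rabs_Ropp.
  have : r * w <= lY * w by nra.
  lra.
have hE1 : Rabs E1 <= 3*w*lY.
  have a1 : Rabs ((1-tY)*lY*(uY-uX)) <= lY * w.
    apply: absprod => //. rewrite Rabs_right; nra.
  have a2 : Rabs (((1-tY)*lY - t1)*uX) <= w*lY * 1.
    apply: absprod => //. rewrite Rabs_right; lra.
  rewrite /E1. have := tri3 (pY - pX) ((1-tY)*lY*(uY-uX)) (((1-tY)*lY - t1)*uX).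
  have : r * w <= lY * w by nra.
  lra.
have -> : (pY - tY*lY*uY) + s*(lY*uY) - ((pX - t0*uX) + s*((pX + t1*uX) - (pX - t0*uX)))
   = (1 - s) * E0 + s * E1 by rewrite /E0 /E1; ring.
have := Rabs_triang ((1-s)*E0) (s*E1).
have rs : Rabs s <= s by rewrite Rabs_right; lra.
have rs' : Rabs (1-s) <= 1-s by rewrite Rabs_right; lra.
have b1 := @absprod _ _ _ _ rs hE1. have b2 := @absprod _ _ _ _ rs' hE0.
nra.
Qed.
Definition baseP d (c : pt d) r (s : segment d) t k := (fst s k + t*(snd s k - fst s k) - c k)/r.
Definition dirP d (s : segment d) k := (snd s k - fst s k)/seg_length s.
Arguments baseP {d}. Arguments dirP {d}.

Lemma seg_len_coord d (s : segment d) k : Rabs (snd s k - fst s k) <= seg_length s.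
Proof.
have := norm_ge_coord _ (vsub (fst s) (snd s)) k. rewrite /seg_length /edist /vsub.
rewrite -(Rabs_Ropp (snd s k - fst s k)) (_ : - (snd s k - fst s k) = fst s k - snd s k) //; ring.
Qed.

Lemma div_abs_le a l : 0 < l -> Rabs a <= l -> Rabs (a / l) <= 1.
Proof.
move=> hl ha. rewrite /Rdiv Rabs_mult Rabs_inv (Rabs_right l); last lra.
apply: (Rmult_le_reg_r l) => //. rewrite Rmult_assoc Rinv_l; last lra. lra.
Qed.

Lemma sqrt_d_pos d : (1 <= d)%nat -> 0 < sqrt (INR d).
Proof. move=> hd. apply: sqrt_lt_R0. apply: lt_0_INR. by apply/ltP. Qed.

Lemma seg_cover d sigma r c (X Y : segment d) tX tY :
 (1 <= d)%nat -> 0 < sigma -> 0 < r -> r <= seg_length Y -> seg_length Y <= seg_length X ->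
 0 <= tX <= 1 -> 0 <= tY <= 1 ->
 Rabs (tY - tX) < sigma / (3 * sqrt (INR d)) ->
 (forall k, Rabs (baseP c r Y tY k - baseP c r X tX k) < sigma / (3 * sqrt (INR d))) ->
 (forall k, Rabs (dirP Y k - dirP X k) < sigma / (3 * sqrt (INR d))) ->
 shadows sigma (seg_set X) (seg_set Y).
Proof.
move=> hd hsig hr hrl hll htX htY ht hb hu.
have sd := sqrt_d_pos _ hd.
set w := sigma / (3 * sqrt (INR d)) in ht hb hu.
have hw : 0 < w by rewrite /w; apply: Rdiv_lt_0_compat; lra.
set lY := seg_length Y in hrl hll hu *. set lX := seg_length X in hll hu *.
have hlY : 0 < lY by lra. have hlX : 0 < lX by lra.
move=> D HD q [s [hs hq]].
have hD : lY <= D.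
  apply: (proj1 HD). exists (fst Y), (snd Y). split; last split => //.
  - exists 0. split; first lra. move=> i; ring.
  - exists 1. split; first lra. move=> i; ring.
set t0 := Rmin (tY*lY) (tX*lX). set t1 := Rmin ((1-tY)*lY) ((1-tX)*lX).
have ht0 : 0 <= t0 <= tX * lX.
  split; last by apply: Rmin_r. apply: Rmin_glb; nra.
have ht1 : 0 <= t1 <= (1-tX) * lX.
  split; last by apply: Rmin_r. apply: Rmin_glb; nra.
set a0 := t0 / lX. set a1 := t1 / lX.
have ha0 : 0 <= a0 <= tX.
  have e : t0 = a0 * lX by rewrite /a0; field; lra. rewrite e in ht0. nra.
have ha1 : 0 <= a1 <= 1 - tX.
  have e : t1 = a1 * lX by rewrite /a1; field; lra. rewrite e in ht1. nra.
set sp := (tX - a0) + s * ((tX + a1) - (tX - a0)).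
exists (fun k => fst X k + sp * (snd X k - fst X k)). split.
  exists sp. split; last by []. rewrite /sp. nra.
apply: (@Rle_trans _ (sqrt (INR d) * (3 * w * lY))).
  apply: norm_le_coord; first by nra.
  move=> k. rewrite /vsub hq.
  set pY := fst Y k + tY * (snd Y k - fst Y k).
  set pX := fst X k + tX * (snd X k - fst X k).
  have e : fst Y k + s * (snd Y k - fst Y k) - (fst X k + sp * (snd X k - fst X k)) =
    (pY - tY*lY*(dirP Y k)) + s*(lY*(dirP Y k)) -
   ((pX - t0*(dirP X k)) + s*((pX + t1*(dirP X k)) - (pX - t0*(dirP X k)))).
    rewrite /pY /pX /dirP /sp /a0 /a1 -/lY -/lX. field. lra.
  rewrite e /t0 /t1. apply: (@coord_bound _ _ _ _ _ _ _ _ _ r) => //; try lra.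
  - rewrite /dirP -/lX. apply: div_abs_le => //. exact: seg_len_coord.
  - have e2 : pY - pX = r * (baseP c r Y tY k - baseP c r X tX k) by rewrite /baseP /pY /pX; field; lra.
    rewrite e2 Rabs_mult (Rabs_right r); last lra.
    apply: Rmult_le_compat_l; first lra. by left.
  - left; exact: hu.
apply: (@Rle_trans _ (sigma * lY)); last by apply: Rmult_le_compat_l; [lra|exact hD].
right. rewrite /w. field. lra.
Qed.
Lemma INR_expn K n : INR (K ^ n)%N = INR K ^ n.
Proof. elim: n => [|n IH] //=. by rewrite expnS mult_INR IH. Qed.

Lemma card_key d K : #|{: {ffun 'I_d -> 'I_K} * {ffun 'I_d -> 'I_K} * 'I_K}| = (K ^ d * K ^ d * K)%N.
Proof. by rewrite !card_prod !card_ffun !card_ord. Qed.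

Lemma pow_2d1 x d : x ^ d * x ^ d * x = x ^ (2 * d + 1)%N.
Proof. rewrite mul2n -addnn !pow_add /=. ring. Qed.

Lemma absle' x b : Rabs x <= b -> - b <= x <= b.
Proof. move=> h. have := Rle_abs x. have := Rle_abs (- x). rewrite Rabs_Ropp. lra. Qed.

Lemma key_close d sigma r c (Y X : segment d) tY tX :
  (1 <= d)%nat -> 0 < sigma -> 0 < r -> r <= seg_length Y -> r <= seg_length X ->
  0 <= tY <= 1 -> 0 <= tX <= 1 ->
  (forall k, Rabs (baseP c r Y tY k) <= 1) -> (forall k, Rabs (baseP c r X tX k) <= 1) ->
  let w := sigma / (3 * sqrt (INR d)) in
  ([ffun k => kf w (baseP c r Y tY k)], [ffun k => kf w (dirP Y k)], kf w tY) =
  ([ffun k => kf w (baseP c r X tX k)], [ffun k => kf w (dirP X k)], kf w tX) ->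
  Rabs (tY - tX) < w /\
  (forall k, Rabs (baseP c r Y tY k - baseP c r X tX k) < w) /\
  (forall k, Rabs (dirP Y k - dirP X k) < w).
Proof.
move=> hd hs hr hY hX htY htX hbY hbX w [e1 e2 e3].
have sd := sqrt_d_pos _ hd.
have hw : 0 < w by rewrite /w; apply: Rdiv_lt_0_compat; lra.
have hdir : forall (Z : segment d) k, r <= seg_length Z -> - 1 <= dirP Z k <= 1.
  move=> Z k hZ. apply: absle'. apply: div_abs_le; first lra. exact: seg_len_coord.
split; last split.
- apply: kf_close e3 => //; lra.
- move=> k. have := congr1 (fun f : {ffun 'I_d -> 'I_(Kp w).+1} => f k) e1. rewrite /= !ffunE => e.
  apply: kf_close e => //; apply: absle'; [exact: hbY | exact: hbX].
- move=> k. have := congr1 (fun f : {ffun 'I_d -> 'I_(Kp w).+1} => f k) e2. rewrite /= !ffunE => e.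
  apply: kf_close e => //; by apply: hdir.
Qed.

Theorem mainTheorem7 :
  forall d : nat, (1 <= d)%nat ->
  exists C : R,
  forall (sigma r : R) (c : pt d) (L : seq (segment d)),
    0 < sigma < 1 -> 0 < r ->
    distinct_segs L ->
    exposed sigma L ->
    (forall i, (i < size L)%nat -> intersects (seg_set (nth (seg0 d) L i)) (ball c r)) ->
    (forall i, (i < size L)%nat -> r <= seg_length (nth (seg0 d) L i)) ->
    INR (size L) <= C / sigma ^ (2 * d + 2).
Proof.
move=> d hd. exists ((6 * sqrt (INR d) + 3) ^ (2 * d + 2)).
move=> sigma r c L hs hr _ hexp hint hlen.
have sd := sqrt_d_pos _ hd.
set w := sigma / (3 * sqrt (INR d)).
have hw : 0 < w by rewrite /w; apply: Rdiv_lt_0_compat; lra.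
set n := size L.
pose Yi (i : 'I_n) := nth (seg0 d) L i.
have ex : forall i : 'I_n, exists t, 0 <= t <= 1 /\ forall k, Rabs (baseP c r (Yi i) t k) <= 1.
  move=> i. have [x [[t [ht hx]] hb]] := hint i (ltn_ord i).
  exists t. split => // k. rewrite /baseP. apply: div_abs_le => //.
  have := norm_ge_coord _ (vsub x c) k. rewrite /vsub -/(edist x c) hx /Yi. rewrite /ball in hb. lra.
pose tsel i := proj1_sig (constructive_indefinite_description _ (ex i)).
have htsel : forall i, 0 <= tsel i <= 1 /\ forall k, Rabs (baseP c r (Yi i) (tsel i) k) <= 1.
  move=> i. exact: (proj2_sig (constructive_indefinite_description _ (ex i))).
pose F (i : 'I_n) := ([ffun k => kf w (baseP c r (Yi i) (tsel i) k)], [ffun k => kf w (dirP (Yi i) k)], kf w (tsel i)).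
have inj : injective F.
  move=> i j E. case: (eqVneq i j) => // hij. exfalso.
  have hij' : (i : nat) <> j by move=> h; move/negP: hij; apply; apply/eqP; apply: val_inj.
  have [hi1 hi2] := htsel i. have [hj1 hj2] := htsel j.
  have li := hlen i (ltn_ord i). have lj := hlen j (ltn_ord j).
  case: (Rle_dec (seg_length (Yi i)) (seg_length (Yi j))) => hl.
  - have [k1 [k2 k3]] := key_close _ _ _ _ _ _ _ _ hd (proj1 hs) hr li lj hi1 hj1 hi2 hj2 E.
    apply: (hexp j i (ltn_ord j) (ltn_ord i) (nesym hij')).
    apply: (seg_cover _ _ _ _ _ _ _ _ hd (proj1 hs) hr li hl hj1 hi1 k1 k2 k3).
  - have [k1 [k2 k3]] := key_close _ _ _ _ _ _ _ _ hd (proj1 hs) hr lj li hj1 hi1 hj2 hi2 (esym E).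
    apply: (hexp i j (ltn_ord i) (ltn_ord j) hij').
    apply: (seg_cover _ _ _ _ _ _ _ _ hd (proj1 hs) hr lj _ hi1 hj1 k1 k2 k3). apply: Rlt_le; exact: Rnot_le_lt.
have hc := leq_card F inj. rewrite card_ord card_key in hc.
set K := (Kp w).+1 in hc.
have hn : INR n <= INR K ^ (2 * d + 1).
  rewrite -pow_2d1 -!INR_expn -!mult_INR. apply: le_INR. by apply/leP.
set B := (6 * sqrt (INR d) + 3) / sigma.
have [hu1 hu2] := archimed (1 / w).
have hup : (0 <= up (1 / w))%Z.
  apply: le_IZR. have : 0 < 1 / w by apply: Rdiv_lt_0_compat; lra. lra.
have hK : INR K <= B.
  rewrite /K S_INR /Kp INR_IZR_INZ Z2Nat.id; last lia.
  rewrite mult_IZR.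
  have e : 1 / w = 3 * sqrt (INR d) / sigma by rewrite /w; field; lra.
  have hu3 : IZR (up (1/w)) <= 3 * sqrt (INR d) / sigma + 1 by rewrite -e; lra.
  have : 3 * sqrt (INR d) / sigma * 2 + 3 <= B.
    rewrite /B. apply: (Rmult_le_reg_r sigma); first lra.
    have -> : (3 * sqrt (INR d) / sigma * 2 + 3) * sigma = 6 * sqrt (INR d) + 3 * sigma by field; lra.
    have -> : (6 * sqrt (INR d) + 3) / sigma * sigma = 6 * sqrt (INR d) + 3 by field; lra.
    lra.
  simpl IZR. lra.
have hB : 1 <= B.
  rewrite /B. apply: (Rmult_le_reg_r sigma); first lra.
  have -> : (6 * sqrt (INR d) + 3) / sigma * sigma = 6 * sqrt (INR d) + 3 by field; lra.
  lra.
apply: (Rle_trans _ _ _ hn).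
apply: (@Rle_trans _ (B ^ (2 * d + 1))).
  apply: pow_incr. split => //. apply: pos_INR.
apply: (@Rle_trans _ (B ^ (2 * d + 2))).
  apply: Rle_pow => //. apply/leP. by rewrite leq_add2l.
right. rewrite /B /Rdiv Rpow_mult_distr pow_inv. reflexivity.
Qed.
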